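(* For any integer $t\geq 4$, there exist a connected graph $G$ and a function $g:V(G_1)\to V(G_2)$ such that $Dist(G)+Dist(F_G)=t$.
   Context: $Dist(H)$ is the least $t$ such that $H$ has a labeling $V(H)\to\{1,\dots,t\}$ preserved by no non-identity automorphism of $H$. Functigraph: for disjoint copies $G_1,G_2$ of a connected graph $G$ and a function $g:V(G_1)\to V(G_2)$, $F_G$ has vertex set $V(G_1)\cup V(G_2)$ and edge set $E(G_1)\cup E(G_2)\cup\{uv: u\in V(G_1),\ g(u)=v\}$. *)

(* Defs.v *)
From mathcomp Require Import all_boot all_fingroup.
Set Implicit Arguments. Unset Strict Implicit. Unset Printing Implicit Defensive.

Definition simple_graph (T : finType) (e : rel T) : Prop :=
  (forall x y, e x y = e y x) /\ (forall x, ~~ e x x).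

Definition connected_graph (T : finType) (e : rel T) : Prop :=
  (exists x : T, True) /\ (forall x y : T, connect e x y).

Definition is_aut (T : finType) (e : rel T) (s : {perm T}) : Prop :=
  forall x y, e (s x) (s y) = e x y.

Definition distinguishing (T : finType) (e : rel T) (t : nat) : Prop :=
  exists f : T -> nat,
    (forall x, 1 <= f x <= t) /\
    (forall s : {perm T}, is_aut e s -> (forall x, f (s x) = f x) -> s = 1%g).

Definition is_Dist (T : finType) (e : rel T) (d : nat) : Prop :=
  distinguishing e d /\ (forall t, distinguishing e t -> d <= t).

(* Functigraph F_G: vertices inl u (copy G_1) and inr v (copy G_2);
   edges of both copies plus u--g(u) for u in G_1. *)
Definition functigraph (T : finType) (e : rel T) (g : T -> T) : rel (T + T) :=
  fun a b =>
    match a, b with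
    | inl u, inl v => e u v
    | inr u, inr v => e u v
    | inl u, inr v => g u == v
    | inr v, inl u => g u == v
    end.

(* Main.v *)
Require Import Defs.
From mathcomp Require Import all_boot all_fingroup.
From mathcomp Require Import zify.
Set Implicit Arguments. Unset Strict Implicit. Unset Printing Implicit Defensive.

Definition deg (T : finType) (e : rel T) (x : T) := #|[set z | e x z]|.

Lemma deg_aut (T : finType) (e : rel T) s x : is_aut e s -> deg e (s x) = deg e x.
Proof.
move=> ha; rewrite /deg -(card_preimset _ (@perm_inj _ s)).
by apply: eq_card => z; rewrite !inE ha.
Qed.

Lemma upper (T : finType) (e : rel T) (t m : nat) (f k : T -> nat) :
  (forall x, 1 <= f x <= t) ->
  (forall x, minn (deg e x) m = k x) ->
  (forall x y, f x = f y -> k x = k y -> x = y) -> distinguishing e t.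
Proof.
move=> hr hk hi; exists f; split => // s ha hf.
apply/permP => x; rewrite perm1; apply: hi; first exact: hf.
by rewrite -!hk deg_aut.
Qed.

Lemma tperm_aut (T : finType) (e : rel T) x y :
  (forall a b, e a b = e b a) -> (forall z, e x z = e y z) -> is_aut e (tperm x y).
Proof.
move=> hs hxy.
have L : forall a b, e (tperm x y a) b = e a b.
  by move=> a b; case: tpermP => [->|->|] //; rewrite hxy.
by move=> a b; rewrite L hs L hs.
Qed.

Lemma lower (T : finType) (e : rel T) (t : nat) (S : seq T) :
  (forall a b, e a b = e b a) -> uniq S ->
  (forall x y, x \in S -> y \in S -> forall z, e x z = e y z) ->
  distinguishing e t -> size S <= t.
Proof.
move=> hs hu htw [f [hr hd]].
have inj : {in S &, injective f}.
  move=> x y xS yS fxy; apply/eqP/negPn/negP => nxy.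
  have := hd (tperm x y) (tperm_aut hs (htw x y xS yS)).
  have H : (forall z, f (tperm x y z) = f z) by move=> z; case: tpermP => [->|->|].
  move=> /(_ H) /(congr1 (fun s : {perm T} => s x)); rewrite tpermL perm1.
  by move=> eyx; rewrite eyx eqxx in nxy.
rewrite -(size_map f) -(size_iota 1 t); apply: uniq_leq_size.
  by rewrite map_inj_in_uniq.
move=> z /mapP [x _ ->]; rewrite mem_iota; have := hr x; lia.
Qed.

Lemma card_ge (T : finType) (A : {set T}) (s : seq T) :
  uniq s -> {subset s <= A} -> size s <= #|A|.
Proof.
move=> hu hs; rewrite -(card_uniqP hu); apply: subset_leq_card; exact/subsetP.
Qed.

Definition star n : rel (option 'I_n.+2) := fun x y => (x == None) != (y == None).
Arguments star : clear implicits.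

Lemma star_sym n : forall a b, star n a b = star n b a.
Proof. by move=> a b; rewrite /star eq_sym. Qed.

Lemma star_simple n : simple_graph (star n).
Proof. split; first exact: star_sym. by move=> x; rewrite /star eqxx. Qed.

Lemma star_conn n : connected_graph (star n).
Proof.
split; first by exists None.
have h : forall x, connect (star n) x None.
  by case=> [i|]; [apply: connect1 | apply: connect0].
move=> x y; apply: connect_trans (h x) _.
case: y => [j|]; [apply: connect1 | apply: connect0] => //.
Qed.

Definition i0 n : 'I_n.+2 := ord0.
Definition i1 n : 'I_n.+2 := Ordinal (isT : 1 < n.+2).

Lemma star_dist n : is_Dist (star n) n.+2.
Proof.
split.
  apply: (upper (m:=2) (f:=fun x : option 'I_n.+2 => if x is Some i then i.+1 else 1)
                          (k:=fun x : option 'I_n.+2 => if x is Some i then 1 else 2)).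
  - by case=> [i|] //; rewrite ltn_ord.
  - case=> [i|].
      rewrite /deg; have -> : [set z | star n (Some i) z] = [set None].
        by apply/setP => z; rewrite !inE; case: z.
      by rewrite cards1.
    apply/minn_idPr; rewrite /deg; apply: (@card_ge _ _ [:: Some (i0 n); Some (i1 n)]) => //.
    by move=> z; rewrite !inE => /orP [] /eqP ->.
  - by case=> [i|] [j|] //= [] /val_inj ->.
move=> t /(@lower _ _ _ (map Some (enum 'I_n.+2)) (@star_sym n)).
rewrite size_map size_enum_ord; apply.
  by rewrite map_inj_uniq ?enum_uniq // => a b [].
by move=> x y /mapP [i _ ->] /mapP [j _ ->] z.
Qed.

Definition gF (n : nat) (b : bool) (x : option 'I_n.+2) : option 'I_n.+2 :=
  if b && (x == None) then Some (i0 n) else None.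
Arguments gF : clear implicits.

Definition FF n b := functigraph (star n) (gF n b).
Arguments FF : clear implicits.

Lemma FF_sym n b : forall x y, FF n b x y = FF n b y x.
Proof. by case=> u [] v //=; rewrite star_sym. Qed.

Lemma FF_nb2 n b x : ((if x is inl (Some _) then true else false) ||
   (b && (x == inr (Some (i0 n))))) ->
  forall z, FF n b x z = (z == inl None) || (z == inr None).
Proof.
case: x => [[i|]|[i|]] /=.
- by move=> _ [[j|]|[j|]]; rewrite /gF /star /= ?andbF.
- by case: b.
- case: b => //= /eqP [->] [[j|]|[j|]]; rewrite /gF /star /= ?andbF ?eqxx //.
- by case: b.
Qed.

Lemma FF_deg2 n b x : ((if x is inl (Some _) then true else false) ||
   (b && (x == inr (Some (i0 n))))) -> deg (FF n b) x = 2.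
Proof.
move=> H; rewrite /deg.
have -> : [set z | FF n b x z] = [set inl None; inr None].
  by apply/setP => z; rewrite !inE FF_nb2.
by rewrite cards2.
Qed.

Lemma FF_dist n b : is_Dist (FF n b) (n.+2 + b).
Proof.
split.
{ apply: (upper (m:=3)
    (f:=fun x : option 'I_n.+2 + option 'I_n.+2 => match x with
       | inl None => 1 | inr None => 2 | inl (Some i) => i.+1
       | inr (Some i) => if b && (i == i0 n) then n.+3 else i.+1 end)
    (k:=fun x : option 'I_n.+2 + option 'I_n.+2 => match x with
       | inl None => 3 | inr None => 3 | inl (Some i) => 2
       | inr (Some i) => if b && (i == i0 n) then 2 else 1 end)).
  - case=> [[i|]|[i|]] //=; first by have := ltn_ord i; lia.
      by case: b; case: (i == i0 n) => //=; have := ltn_ord i; lia.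
  - case=> [[i|]|[i|]].
    + by rewrite FF_deg2.
    + apply/minn_idPr; rewrite /deg.
      apply: (@card_ge _ _ [:: inl (Some (i0 n)); inl (Some (i1 n)); inr (gF n b None)]) => //.
      by move=> z; rewrite !inE => /orP [/eqP ->|/orP [] /eqP ->] //=; rewrite eqxx.
    + case E: (b && (i == i0 n)).
        by rewrite FF_deg2 //; move: E; case: b => //= /eqP ->.
      rewrite /deg.
      have -> : [set z | FF n b (inr (Some i)) z] = [set inr None].
        apply/setP => z; rewrite !inE; case: z => [[j|]|[j|]] //=.
        1-2: rewrite /gF; case: b E => //= E.
        transitivity false => //; apply/negbTE; apply: contraFN E => /eqP [->].
        by rewrite eqxx.
      by rewrite cards1.
    + apply/minn_idPr; rewrite /deg.
      apply: (@card_ge _ _ [:: inr (Some (i0 n)); inr (Some (i1 n)); inl (Some (i0 n))]) => //.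
      move=> z; rewrite !inE => /orP [/eqP ->|/orP [] /eqP ->] //=.
      by rewrite /gF andbF.
  - case=> [[i|]|[i|]] [[j|]|[j|]] //=.
    all: try (case: (b && (i == i0 n)) / andP => [[_ /eqP ->]|_]).
    all: try (case: (b && (j == i0 n)) / andP => [[_ /eqP ->]|_]).
    all: move=> // h1 h2; try congruence.
    all: try (have := ltn_ord i); try (have := ltn_ord j); try lia.
    all: by move=> *; congr (_ _); congr (_ _); apply: val_inj; case: h1. }
move=> t.
set S := (if b then [:: inr (Some (i0 n))] else [::]) ++
         map (fun i => inl (Some i)) (enum 'I_n.+2).
have hS : forall x, x \in S -> ((if x is inl (Some _) then true else false) ||
   (b && (x == inr (Some (i0 n))))).
  move=> x; rewrite mem_cat => /orP [|/mapP [i _ ->] //].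
  by case: (b) => //; rewrite inE => ->; rewrite orbT.
move=> /(@lower _ _ _ S (@FF_sym n b)).
have -> : size S = n.+2 + b.
  by rewrite /S size_cat size_map size_enum_ord; case: (b) => /=; lia.
apply.
  rewrite /S cat_uniq map_inj_uniq ?enum_uniq; last by move=> a c [].
  case: (b) => //=; rewrite ?andbT.
  - by apply/hasP => -[z /mapP [i _ ->]]; rewrite inE.
  - by apply/hasP => -[z _].
by move=> x y /hS hx /hS hy z; rewrite !FF_nb2.
Qed.

Theorem lemma2p7 (t : nat) : 4 <= t ->
  exists (T : finType) (e : rel T) (g : T -> T) (d1 d2 : nat),
    simple_graph e /\ connected_graph e /\
    is_Dist e d1 /\ is_Dist (functigraph e g) d2 /\ d1 + d2 = t.
Proof.
move=> ht.
exists (option 'I_(t./2 - 2).+2), (star (t./2 - 2)), (gF (t./2 - 2) (odd t)),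
  (t./2 - 2).+2, ((t./2 - 2).+2 + odd t).
split; first exact: star_simple.
split; first exact: star_conn.
split; first exact: star_dist.
split; first exact: FF_dist.
have := odd_double_half t; rewrite -addnn.
have : (odd t : nat) <= 1 by case: (odd t).
move: (odd t : nat) (t./2) => o h; lia.
Qed.
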